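(* Let $m,n$ be natural numbers with $\min\{m,n\}\ge4$, let $\{|e_i\rangle\}_{i=0}^{m-1}$ and $\{|f_j\rangle\}_{j=0}^{n-1}$ be the canonical bases of $\mathbb{C}^m$ and $\mathbb{C}^n$, and let $a=3$ or $a>5$ (real). Let $$\mathcal{S}=\mathrm{span}\{|e_{i-2}\rangle\otimes|f_{j+1}\rangle-a|e_{i-1}\rangle\otimes|f_j\rangle+a|e_i\rangle\otimes|f_{j-1}\rangle-|e_{i+1}\rangle\otimes|f_{j-2}\rangle:\ 2\le i\le m-2,\ 2\le j\le n-2\}\subset\mathbb{C}^m\otimes\mathbb{C}^n.$$ Then $\mathcal{S}$ does not contain any non-zero vector of Schmidt rank $\le3$, and $\dim\mathcal{S}=(m-3)(n-3)$.
   Context: The Schmidt rank of $|\psi\rangle=\sum_{i,j}c_{ij}|e_i\rangle\otimes|f_j\rangle\in\mathbb{C}^m\otimes\mathbb{C}^n$ is the minimal number of terms in a decomposition $|\psi\rangle=\sum_{l=1}^r|u_l\rangle\otimes|v_l\rangle$; equivalently, the rank of the matrix $[c_{ij}]$. (The paper presents $\mathcal{S}$ as the direct sum over $3\le d\le m+n-5$ of the spans of the generators with $i+j=d+1$, which is the same subspace.) *)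

(* Defs.v *)
From HB Require Import structures.
From mathcomp Require Import all_boot all_order all_algebra.
From mathcomp Require Import reals.
From mathcomp Require Import complex.
Set Implicit Arguments. Unset Strict Implicit. Unset Printing Implicit Defensive.
Import Order.TTheory GRing.Theory Num.Theory.
Local Open Scope ring_scope.

(* A vector sum_{k,l} c_{kl} |e_k> (x) |f_l> of C^m (x) C^n is represented by
   its coefficient matrix [c_{kl}] : 'M[C]_(m, n), with C = R[i] the complex
   numbers over a real field R. *)

Definition schmidt_rank (C : fieldType) (m n : nat) (psi : 'M[C]_(m, n)) : nat :=
  \rank psi.

(* Coefficient matrix of the elementary tensor |e_k> (x) |f_l>
   (zero if an index is out of range; never happens for the generators). *)
Definition etensor (C : fieldType) (m n : nat) (k l : nat) : 'M[C]_(m, n) :=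
  \matrix_(p < m, q < n) ((p == k :> nat) && (q == l :> nat))%:R.

Definition gen5 (C : fieldType) (m n : nat) (a : C) (i j : nat) : 'M[C]_(m, n) :=
  @etensor C m n (i - 2)%N (j + 1)%N - a *: @etensor C m n (i - 1)%N j
  + a *: @etensor C m n i (j - 1)%N - @etensor C m n (i + 1)%N (j - 2)%N.

Definition S5 (C : fieldType) (m n : nat) (a : C) : {vspace 'M[C]_(m, n)} :=
  <<[seq @gen5 C m n a i j | i <- iota 2 (m - 3), j <- iota 2 (n - 3)]>>%VS.

(* Main.v *)
Require Import Defs.
From HB Require Import structures.
From mathcomp Require Import all_boot all_order all_algebra.
From mathcomp Require Import reals complex.
From mathcomp Require Import ring lra zify.
Set Implicit Arguments. Unset Strict Implicit. Unset Printing Implicit Defensive.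
Import Order.TTheory GRing.Theory Num.Theory.
Local Open Scope ring_scope.
Definition ordp (C : fieldType) (w : {poly C}) : nat := find (fun c => c != 0) w.

Definition Gp (C : fieldType) (g : nat -> C) (w : {poly C}) : {poly C} :=
  \poly_(l < size w) (w`_l * g l).

Lemma coefGp (C : fieldType) g (w : {poly C}) l : (Gp g w)`_l = w`_l * g l.
Proof.
rewrite coef_poly; case: ltnP => // h; by rewrite nth_default // mul0r.
Qed.

Lemma GpB (C : fieldType) g (v w : {poly C}) c :
  Gp g (v - c *: w) = Gp g v - c *: Gp g w.
Proof. apply/polyP => l; rewrite !(coefGp, coefB, coefZ); ring. Qed.

Lemma Gp0 (C : fieldType) g : Gp g (0 : {poly C}) = 0.
Proof. apply/polyP => l; by rewrite coefGp coef0 mul0r. Qed.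

Lemma ordp_neq0 (C : fieldType) (w : {poly C}) : w != 0 -> w`_(ordp w) != 0.
Proof.
move=> wn0; have: has (fun c => c != 0) w.
  apply/hasP; exists (lead_coef w); last by rewrite lead_coef_eq0.
  by rewrite /lead_coef mem_nth // prednK ?leqnn // size_poly_gt0.
by move/(nth_find 0).
Qed.

Lemma ordp_min (C : fieldType) (w : {poly C}) i : (i < ordp w)%N -> w`_i = 0.
Proof. by move/(before_find 0)/negbFE/eqP. Qed.

Lemma ordp_lt (C : fieldType) (w : {poly C}) : w != 0 -> (ordp w < size w)%N.
Proof.
move=> wn0; rewrite ltnNge; apply/negP => h.
by move: (ordp_neq0 wn0); rewrite nth_default ?eqxx.
Qed.

Lemma ordp_gt (C : fieldType) (w : {poly C}) i :
  w != 0 -> (forall j, (j <= i)%N -> w`_j = 0) -> (i < ordp w)%N.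
Proof.
move=> wn0 h; rewrite ltnNge; apply/negP => /h.
by move/eqP; rewrite (negbTE (ordp_neq0 wn0)).
Qed.

Lemma ordpXn (C : fieldType) k : ordp ('X^k : {poly C}) = k.
Proof.
have h : ('X^k : {poly C}) != 0 by rewrite monic_neq0 ?monicXn.
apply/eqP; rewrite eqn_leq; apply/andP; split.
  rewrite leqNgt; apply/negP => /ordp_min; rewrite coefXn eqxx; apply/eqP; exact: oner_neq0.
rewrite leqNgt; apply/negP => lt; move: (ordp_neq0 h); rewrite coefXn.
by rewrite eq_sym (ltn_eqF lt) eqxx.
Qed.
Definition Gmat (C : fieldType) k (g : nat -> nat -> C) (e : 'I_k -> nat) : 'M[C]_k :=
  \matrix_(j, r) g j (e r).

Lemma det_N_neq0 (C : fieldType) k (g : nat -> nat -> C) (w : 'I_k -> {poly C}) :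
  (forall e : 'I_k -> nat, injective e -> \det (Gmat g e) != 0) ->
  (forall r, w r != 0) -> injective (fun r => ordp (w r)) ->
  \det (\matrix_(j, r) Gp (g j) (w r) : 'M[{poly C}]_k) != 0.
Proof.
move=> hG wn0 inj.
pose e r := ordp (w r).
pose N' : 'M[{poly C}]_k :=
  \matrix_(j, r) \poly_(l < size (w r)) ((w r)`_(l + e r)%N * g j (l + e r)%N).
have -> : (\matrix_(j, r) Gp (g j) (w r) : 'M[{poly C}]_k)
          = N' *m diag_mx (\row_r 'X^(e r)).
  rewrite mul_mx_diag; apply/matrixP => j r; rewrite !mxE.
  apply/polyP => i; rewrite coefGp coefMXn coef_poly.
  case: ltnP => hi; first by rewrite ordp_min ?mul0r.
  case: ltnP => hs; first by rewrite (subnK hi).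
  rewrite nth_default ?mul0r //; apply: leq_trans hs _; exact: leq_subr.
rewrite det_mulmx det_diag mulf_neq0 //; last first.
  by apply/prodf_neq0 => r _; rewrite mxE expf_neq0 // polyX_eq0.
have hmap : map_mx (horner_eval 0) N' = Gmat g e *m diag_mx (\row_r (w r)`_(e r)).
  apply/matrixP => j r; rewrite mul_mx_diag !mxE /= horner_evalE horner_coef0 coef_poly.
  by rewrite size_poly_gt0 wn0 add0n mulrC.
have : \det (map_mx (horner_eval 0) N') != 0.
  rewrite hmap det_mulmx det_diag mulf_neq0 //; first exact: hG.
  by apply/prodf_neq0 => r _; rewrite mxE ordp_neq0.
by rewrite det_map_mx; apply: contraNneq => ->; rewrite rmorph0.
Qed.

Lemma core_u0 (C : fieldType) k (g : nat -> nat -> C) (w u : 'I_k -> {poly C}) :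
  (forall e : 'I_k -> nat, injective e -> \det (Gmat g e) != 0) ->
  (forall r, w r != 0) -> injective (fun r => ordp (w r)) ->
  (forall j : 'I_k, \sum_r u r * Gp (g j) (w r) = 0) -> forall r, u r = 0.
Proof.
move=> hG wn0 inj hs r.
set N := (\matrix_(j, r) Gp (g j) (w r) : 'M[{poly C}]_k).
have hN0 := det_N_neq0 hG wn0 inj; rewrite -/N in hN0.
pose uc : 'cV[{poly C}]_k := \col_r u r.
have h1 : N *m uc = 0.
  apply/matrixP => j i; rewrite !mxE -[RHS](hs j); apply: eq_bigr => t _.
  by rewrite !mxE mulrC.
have : (\det N)%:M *m uc = 0 by rewrite -mul_adj_mx -mulmxA h1 mulmx0.
rewrite mul_scalar_mx => /matrixP /(_ r 0); rewrite !mxE => /eqP.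
by rewrite mulf_eq0 (negbTE hN0) => /eqP.
Qed.
Definition goodw (C : fieldType) k N (w : 'I_k -> {poly C}) :=
  forall r : 'I_k, w r != 0 /\ ((size (w r) <= N)%N \/ w r = 'X^(N + r)).

Lemma sum_upd2 (V : nmodType) k (f f' : 'I_k -> V) r0 s0 : r0 != s0 ->
  (forall t, t != r0 -> t != s0 -> f' t = f t) -> f' r0 + f' s0 = f r0 + f s0 ->
  \sum_t f' t = \sum_t f t.
Proof.
move=> rs ho h2; have sr : s0 != r0 by rewrite eq_sym.
rewrite (bigD1 r0) // (bigD1 s0) //= [RHS](bigD1 r0) // [in RHS](bigD1 s0) //=.
rewrite !addrA h2; congr (_ + _); apply: eq_bigr => t /andP [t1 t2]; exact: ho.
Qed.

Lemma good_ord_lt (C : fieldType) k N (w : 'I_k -> {poly C}) r :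
  goodw N w -> (ordp (w r) < N + k)%N.
Proof.
move=> /(_ r) [wn0 [hs|->]].
  by apply: leq_trans (ordp_lt wn0) _; apply: leq_trans hs (leq_addr _ _).
by rewrite ordpXn ltn_add2l.
Qed.

Lemma reduce_step (C : fieldType) k N (T : (nat -> C) -> {poly C})
  (u w : 'I_k -> {poly C}) (r0 s0 : 'I_k) :
  goodw N w -> (forall g, \sum_r u r * Gp g (w r) = T g) ->
  r0 != s0 -> ordp (w r0) = ordp (w s0) ->
  exists (u' w' : 'I_k -> {poly C}), [/\ goodw N w', (forall g, \sum_r u' r * Gp g (w' r) = T g) &
    (\sum_r ordp (w r) < \sum_r ordp (w' r))%N].
Proof.
move=> hg hT rs he.
have sr : s0 != r0 by rewrite eq_sym.
move: he; move Ee : (ordp (w r0)) => e he.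
have [wr0 hr0] := hg r0; have [ws0 hs0] := hg s0.
have sizr : (size (w r0) <= N)%N.
  case: hr0 => // fr; exfalso.
  have eN : e = (N + r0)%N by rewrite -Ee fr ordpXn.
  case: hs0 => [hs|fs].
    by move: (ordp_lt ws0); rewrite -he eN => /(leq_trans)/(_ hs); rewrite ltnNge leq_addr.
  move: he; rewrite eN fs ordpXn => /eqP; rewrite eqn_add2l => /eqP /val_inj.
  by move/eqP; rewrite (negbTE rs).
have sizs : (size (w s0) <= N)%N.
  case: hs0 => // fs; exfalso.
  case: hr0 => [hr|fr].
    by move: (ordp_lt wr0); rewrite Ee he fs ordpXn => /(leq_trans)/(_ hr); rewrite ltnNge leq_addr.
  by move: sizr; rewrite fr size_polyXn ltnNge leq_addr.
have eN : (e < N)%N by rewrite -Ee; apply: leq_trans (ordp_lt wr0) sizr.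
set c := (w s0)`_e / (w r0)`_e.
set ws' := w s0 - c *: w r0.
pose w' := fun t : 'I_k => if t == s0 then (if ws' == 0 then 'X^(N + s0) else ws') else w t.
pose u' := fun t : 'I_k => if t == r0 then u r0 + c *: u s0
             else if t == s0 then (if ws' == 0 then 0 else u s0) else u t.
exists u', w'; split.
- move=> t; rewrite /w' /=; case: (t =P s0) => [->|_]; last exact: hg.
  case: (ws' =P 0) => [_|/eqP nz]; first by split; [rewrite monic_neq0 ?monicXn | right].
  split => //; left; rewrite /ws' (leq_trans (size_polyD _ _)) // geq_max sizs.
  by rewrite size_polyN (leq_trans (size_scale_leq _ _)).
- move=> g; rewrite -(hT g); apply: (sum_upd2 rs).
    by move=> t tr ts; rewrite /u' /w' (negbTE tr) (negbTE ts).
  rewrite /u' /w' eqxx (negbTE rs) (negbTE sr) eqxx.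
  have hG : Gp g ws' = Gp g (w s0) - c *: Gp g (w r0) by rewrite GpB.
  case: eqP => [z|_].
    move: hG; rewrite z Gp0 => /eqP; rewrite eq_sym subr_eq0 => /eqP ->.
    rewrite -!mul_polyC; ring.
  rewrite hG -!mul_polyC; ring.
- rewrite (bigD1 s0) //= [X in (_ < X)%N](bigD1 s0) //= -addSn leq_add //.
    rewrite /w' eqxx; case: eqP => [_|/eqP nz].
      by rewrite ordpXn -he (leq_trans eN) // leq_addr.
    rewrite -he; apply: ordp_gt => // j; rewrite leq_eqVlt => /orP [/eqP ->|lt].
      rewrite /ws' coefB coefZ /c divfK ?subrr // -Ee; exact: ordp_neq0.
    by rewrite /ws' coefB coefZ !ordp_min ?mulr0 ?subrr // ?Ee -?he.
  by rewrite leq_eqVlt; apply/orP; left; apply/eqP; apply: eq_bigr => t ts; rewrite /w' (negbTE ts).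
Qed.
Lemma reduce (C : fieldType) k N (T : (nat -> C) -> {poly C}) (u w : 'I_k -> {poly C}) :
  goodw N w -> (forall g, \sum_r u r * Gp g (w r) = T g) ->
  exists (u' w' : 'I_k -> {poly C}), [/\ goodw N w', injective (fun r => ordp (w' r)) &
    forall g, \sum_r u' r * Gp g (w' r) = T g].
Proof.
have bound : forall w : 'I_k -> {poly C}, goodw N w ->
    (\sum_r ordp (w r) <= k * (N + k))%N.
  move=> w0 hg; apply: (@leq_trans (\sum_(r < k) (N + k))%N).
    by apply: leq_sum => r _; exact: ltnW (good_ord_lt r hg).
  by rewrite sum_nat_const card_ord.
suff H : forall M (u w : 'I_k -> {poly C}),
    (k * (N + k) - \sum_r ordp (w r) <= M)%N -> goodw N w ->
    (forall g, \sum_r u r * Gp g (w r) = T g) ->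
    exists (u' w' : 'I_k -> {poly C}), [/\ goodw N w', injective (fun r => ordp (w' r)) &
    forall g, \sum_r u' r * Gp g (w' r) = T g].
  by apply: H; apply: leqnn.
elim=> [|M IH] u0 w0 hM hg hT;
  (case: (boolP [exists r, exists s, (r != s) && (ordp (w0 r) == ordp (w0 s))])
   => [/existsP [r0 /existsP [s0 /andP [rs /eqP he]]]|nb];
   last first).
- exists u0, w0; split => // x y hxy; apply/eqP; apply: contraNT nb => nxy.
  by apply/existsP; exists x; apply/existsP; exists y; rewrite nxy hxy eqxx.
- have [u' [w' [hg' hT' hlt]]] := reduce_step hg hT rs he.
  have := bound _ hg'; have := bound _ hg; lia.
- exists u0, w0; split => // x y hxy; apply/eqP; apply: contraNT nb => nxy.
  by apply/existsP; exists x; apply/existsP; exists y; rewrite nxy hxy eqxx.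
- have [u' [w' [hg' hT' hlt]]] := reduce_step hg hT rs he.
  apply: (IH u' w') => //.
  have := bound _ hg'; have := bound _ hg; lia.
Qed.
Definition Psi (C : fieldType) m n (g : nat -> C) (psi : 'M[C]_(m, n)) : {poly C} :=
  \sum_(i < m) \sum_(l < n) (psi i l * g l) *: 'X^(i + l).

Fact Psi_is_linear (C : fieldType) m n (g : nat -> C) : linear (@Psi C m n g).
Proof.
move=> c A B; rewrite /Psi scaler_sumr -big_split; apply: eq_bigr => i _.
rewrite scaler_sumr -big_split; apply: eq_bigr => l _.
by rewrite !mxE /= scalerA -scalerDl mulrDl mulrA.
Qed.

HB.instance Definition _ (C : fieldType) m n (g : nat -> C) :=
  GRing.isLinear.Build C 'M[C]_(m, n) {poly C} _ (@Psi C m n g) (Psi_is_linear g).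

Lemma ord_neqF (n : nat) (j : 'I_n) l (hl : (l < n)%N) :
  (j == Ordinal hl) = false -> (nat_of_ord j == l) = false.
Proof. move=> h; apply/negbTE; apply: contraFN h => /eqP h; apply/eqP; exact: val_inj. Qed.

Lemma Psi_etensor (C : fieldType) m n (g : nat -> C) k l :
  (k < m)%N -> (l < n)%N -> Psi g (@etensor C m n k l) = g l *: 'X^(k + l).
Proof.
move=> hk hl; rewrite /Psi (bigD1 (Ordinal hk)) //= (bigD1 (Ordinal hl)) //=.
rewrite mxE !eqxx mul1r big1 ?addr0; last first.
  move=> j /negbTE hj; rewrite mxE.
  rewrite (ord_neqF hj).
  by rewrite andbF mul0r scale0r.
rewrite big1 ?addr0 // => j /negbTE hj; apply: big1 => q _; rewrite mxE.
rewrite (ord_neqF hj).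
by rewrite mul0r scale0r.
Qed.
Lemma Psi_gen (C : fieldType) m n (a : C) (g : nat -> C) i j :
  (forall t, g (t+3)%N - a * g (t+2)%N + a * g (t+1)%N - g t = 0) ->
  (2 <= i)%N -> (i + 1 < m)%N -> (2 <= j)%N -> (j + 1 < n)%N ->
  Psi g (@gen5 C m n a i j) = 0.
Proof.
move=> rec hi hm hj hn.
rewrite /gen5 !(linearB (@Psi C m n g)) !(linearD (@Psi C m n g)) !(raddfN (@Psi C m n g)) !(linearZZ (@Psi C m n g)) /= !Psi_etensor; try lia.
have -> : (i - 2 + (j + 1) = i + j - 1)%N by lia.
rewrite !(linearZZ (@Psi C m n g)) /= !Psi_etensor; try lia.
have -> : (i - 1 + j = i + j - 1)%N by lia.
have -> : (i + (j - 1) = i + j - 1)%N by lia.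
have -> : (i + 1 + (j - 2) = i + j - 1)%N by lia.
rewrite !scalerA -scalerBl -scalerDl -scalerBl.
have := rec (j - 2)%N.
have -> : (j - 2 + 3 = j + 1)%N by lia.
have -> : (j - 2 + 2 = j)%N by lia.
have -> : (j - 2 + 1 = j - 1)%N by lia.
by move=> ->; rewrite scale0r.
Qed.

Lemma Psi_S5 (C : fieldType) m n (a : C) (g : nat -> C) psi :
  (forall t, g (t+3)%N - a * g (t+2)%N + a * g (t+1)%N - g t = 0) ->
  psi \in @S5 C m n a -> Psi g psi = 0.
Proof.
move=> rec hpsi.
set X := [seq @gen5 C m n a i j | i <- iota 2 (m - 3), j <- iota 2 (n - 3)].
have hX : psi \in span (in_tuple X) by [].
rewrite (coord_span hX) linear_sum big1 // => i _; rewrite linearZ /=.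
have : X`_i \in X by rewrite mem_nth.
case/allpairsP => [[i0 j0] /= [hi0 hj0 ->]].
move: hi0 hj0; rewrite !mem_iota => /andP [hi1 hi2] /andP [hj1 hj2].
rewrite Psi_gen ?scaler0 //; lia.
Qed.
Lemma Psi_eq0 (C : fieldType) m n (psi : 'M[C]_(m, n)) :
  (forall g, Psi g psi = 0) -> psi = 0.
Proof.
move=> h; apply/matrixP => k l; rewrite mxE.
have := congr1 (fun p : {poly C} => p`_(k + l)) (h (fun t => (t == l)%:R)).
rewrite /Psi coef0 coef_sum (bigD1 k) //= coef_sum (bigD1 l) //= coefZ coefXn !eqxx !mulr1.
rewrite [X in _ + X + _]big1 ?addr0; last first.
  move=> q hq; rewrite coefZ.
  have -> : (nat_of_ord q == l) = false by apply/negbTE.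
  by rewrite mulr0 mul0r.
rewrite big1 ?addr0 // => j hj; rewrite coef_sum big1 // => q _; rewrite coefZ coefXn.
case: (nat_of_ord q =P l) => [->|_]; last by rewrite mulr0 mul0r.
have -> : ((k + l)%N == (j + l)%N) = false by rewrite eqn_add2r eq_sym; apply/negbTE.
by rewrite mulr0.
Qed.
Lemma init_repr (C : fieldType) m n (psi : 'M[C]_(m, n)) :
  exists u w : 'I_(\rank psi) -> {poly C},
    goodw n w /\ forall g, \sum_r u r * Gp g (w r) = Psi g psi.
Proof.
pose U := col_base psi; pose V := row_base psi.
pose up r := \sum_(i < m) U i r *: ('X^i : {poly C}).
pose E r l := oapp (V r) 0 (insub l).
pose wp r := \poly_(l < n) E r l.
exists (fun r => if wp r == 0 then 0 else up r),
       (fun r => if wp r == 0 then 'X^(n + r) else wp r); split.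
  move=> r /=; case: (wp r =P 0) => [_|/eqP nz].
    by split; [rewrite monic_neq0 ?monicXn|right].
  by split => //; left; rewrite size_poly.
move=> g.
have -> : \sum_r (if wp r == 0 then 0 else up r) *
            Gp g (if wp r == 0 then 'X^(n + r) else wp r)
          = \sum_r up r * Gp g (wp r).
  by apply: eq_bigr => r _; case: (wp r =P 0) => [->|_] //; rewrite Gp0 !mul0r mulr0.
have hG : forall r, Gp g (wp r) = \sum_(l < n) (V r l * g l) *: 'X^l.
  move=> r; transitivity (\poly_(l < n) (E r l * g l)).
    by apply/polyP => l; rewrite coefGp !coef_poly; case: ltnP => //; rewrite mul0r.
  by rewrite poly_def; apply: eq_bigr => l _; rewrite /E valK.
rewrite /Psi.
transitivity (\sum_r \sum_(i < m) \sum_(l < n) (U i r * (V r l * g l)) *: 'X^(i + l)).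
  apply: eq_bigr => r _; rewrite hG /up mulr_suml; apply: eq_bigr => i _.
  rewrite mulr_sumr; apply: eq_bigr => l _.
  by rewrite -scalerAl -scalerAr scalerA exprD.
rewrite exchange_big /=; apply: eq_bigr => i _.
rewrite exchange_big /=; apply: eq_bigr => l _.
rewrite -scaler_suml; congr (_ *: _).
have -> : psi i l = (U *m V) i l by rewrite /U /V mulmx_base.
rewrite mxE mulr_suml; apply: eq_bigr => r _.
by rewrite mulrA.
Qed.
Lemma part1_core (C : fieldType) m n (a : C) (g : nat -> nat -> C) (psi : 'M[C]_(m, n)) :
  (forall j, (j < 3)%N -> forall t,
      g j (t+3)%N - a * g j (t+2)%N + a * g j (t+1)%N - g j t = 0) ->
  (forall k (e : 'I_k -> nat), injective e -> \det (Gmat g e) != 0) ->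
  psi \in @S5 C m n a -> (\rank psi <= 3)%N -> psi = 0.
Proof.
move=> rec hdet hS hr.
have [u [w [hg hT]]] := init_repr psi.
have [u' [w' [hg' inj hT']]] := reduce hg hT.
have u0 : forall r, u' r = 0.
  apply: (@core_u0 C _ g w' u' (hdet _)) => //.
  - by move=> r; case: (hg' r).
  - move=> j; rewrite hT'; apply: (Psi_S5 _ hS); apply: rec.
    exact: leq_trans (ltn_ord j) hr.
apply: Psi_eq0 => g0; rewrite -hT' big1 // => r _; by rewrite u0 mul0r.
Qed.
Lemma det_gen (C : fieldType) (phi c : nat -> C) k (e : 'I_k -> nat) :
  injective phi -> (forall l, c l != 0) -> injective e ->
  \det (Gmat (fun j l => phi l ^+ j * c l) e) != 0.
Proof.
move=> iphi hc ie.
have -> : Gmat (fun j l => phi l ^+ j * c l) e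
          = Vandermonde k (\row_r phi (e r)) *m diag_mx (\row_r c (e r)).
  by apply/matrixP => j r; rewrite mul_mx_diag !mxE.
rewrite det_mulmx det_diag det_Vandermonde mulf_neq0 //.
  apply/prodf_neq0 => i _; apply/prodf_neq0 => j hij; rewrite !mxE subr_eq0.
  apply/eqP => /iphi /ie ji; by move: hij; rewrite ji ltnn.
by apply/prodf_neq0 => r _; rewrite mxE.
Qed.

Lemma natC_inj (R : realType) : injective (fun l : nat => (l%:R : R[i])).
Proof.
move=> k l /= h; apply/eqP; rewrite -(@eqr_nat R).
by rewrite -(inj_eq (fmorph_inj (real_complex R))) !rmorph_nat h.
Qed.

Lemma part1_a3 (R : realType) m n (psi : 'M[R[i]]_(m, n)) :
  psi \in @S5 R[i] m n (Complex 3 0) -> (\rank psi <= 3)%N -> psi = 0.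
Proof.
move=> hS hr.
apply: (@part1_core _ m n _ (fun j l => (l%:R : R[i]) ^+ j * 1) psi _ _ hS hr).
  have -> : Complex (3 : R) 0 = 3 :> R[i] by rewrite -(rmorph_nat (real_complex R)).
  move=> j; case: j => [|[|[|j]]] // _ t; rewrite !natrD; ring.
move=> k e ie; apply: det_gen => //; [exact: natC_inj | move=> _; exact: oner_neq0].
Qed.
Lemma exists_alpha (R : realType) (a : R) : 3 < a ->
  exists al : R, 1 < al /\ a = al + al^-1 + 1.
Proof.
move=> ha.
have hD : 0 <= (a - 1) ^+ 2 - 4 by rewrite subr_ge0; nra.
set s := Num.sqrt ((a - 1) ^+ 2 - 4).
have s0 : 0 <= s by exact: sqrtr_ge0.
have ss : s ^+ 2 = (a - 1) ^+ 2 - 4 by rewrite sqr_sqrtr.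
exists (((a - 1) + s) / 2); split; first by lra.
have hal : ((a - 1) + s) / 2 != 0 by apply/eqP; lra.
apply/eqP; rewrite -subr_eq0; apply/eqP.
rewrite -[LHS](@mulfK _ (((a - 1) + s) / 2)) //.
rewrite [X in X / _](_ : _ = 0) ?mul0r //.
rewrite mulrBl !mulrDl mulVf //; nra.
Qed.

Lemma part1_agt3 (R : realType) m n (a : R) (psi : 'M[R[i]]_(m, n)) :
  3 < a -> psi \in @S5 R[i] m n (Complex a 0) -> (\rank psi <= 3)%N -> psi = 0.
Proof.
move=> ha hS hr.
have [al [al1 hadef]] := exists_alpha ha.
set ac : R[i] := real_complex R al.
have al0 : al != 0 by apply/eqP; lra.
have ac0 : ac != 0 by rewrite fmorph_eq0.
have haC : Complex a 0 = ac + ac^-1 + 1.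
  by rewrite /ac -fmorphV -(rmorph1 (real_complex R)) -!rmorphD -hadef.
apply: (@part1_core _ m n _ (fun j l => (ac ^+ l) ^+ j * (ac ^+ l)^-1) psi _ _ hS hr).
  move=> j hj t; rewrite haC.
  have gE : forall l, (ac ^+ l) ^+ j * (ac ^+ l)^-1 = (ac ^+ j / ac) ^+ l.
    by move=> l; rewrite exprMn exprVn -!exprM mulnC.
  rewrite !gE !exprD.
  set b := ac ^+ j / ac.
  suff hb : b ^+ 3 - (ac + ac^-1 + 1) * b ^+ 2 + (ac + ac^-1 + 1) * b - 1 = 0.
    by rewrite -[RHS](mulr0 (b ^+ t)) -hb; ring.
  rewrite /b; clear gE; case: j hj b => [|[|[|j]]] // _ _; field => //.
move=> k e ie; apply: det_gen => //.
  move=> x y /= /eqP; rewrite /ac -!rmorphXn (inj_eq (fmorph_inj _)) => /eqP.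
  by apply: ieexprIn; lra.
by move=> l; rewrite invr_eq0 expf_neq0.
Qed.
Definition Phi (C : fieldType) m n (a : C) (Q : 'M[C]_(m - 3, n - 3)) : 'M[C]_(m, n) :=
  \sum_(s < m - 3) \sum_(t < n - 3) Q s t *: @gen5 C m n a (s + 2) (t + 2).

Fact Phi_is_linear (C : fieldType) m n (a : C) : linear (@Phi C m n a).
Proof.
move=> c A B; rewrite /Phi scaler_sumr -big_split; apply: eq_bigr => i _.
rewrite scaler_sumr -big_split; apply: eq_bigr => l _.
by rewrite !mxE /= scalerA -scalerDl.
Qed.

HB.instance Definition _ (C : fieldType) m n (a : C) :=
  GRing.isLinear.Build C 'M[C]_(m - 3, n - 3) 'M[C]_(m, n) _ (@Phi C m n a)
    (Phi_is_linear a).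

Lemma gen5E (C : fieldType) m n (a : C) i j p q :
  @gen5 C m n a i j p q =
    ((nat_of_ord p == i - 2)%N && (nat_of_ord q == j + 1)%N)%:R
    - a * ((nat_of_ord p == i - 1)%N && (nat_of_ord q == j))%:R
    + a * ((nat_of_ord p == i) && (nat_of_ord q == j - 1)%N)%:R
    - ((nat_of_ord p == i + 1)%N && (nat_of_ord q == j - 2)%N)%:R.
Proof. by rewrite !mxE. Qed.

Lemma Phi_key (C : fieldType) m n (a : C) (Q : 'M[C]_(m - 3, n - 3)) (s : 'I_(m - 3))
  (t : 'I_(n - 3)) :
  Phi a Q = 0 -> (forall (s' : 'I_(m - 3)) t', (s' < s)%N -> Q s' t' = 0) -> Q s t = 0.
Proof.
move=> h IH.
have hm : (s < m)%N by have := ltn_ord s; lia.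
have hn : (t + 3 < n)%N by have := ltn_ord t; lia.
have := congr1 (fun A : 'M[C]_(m, n) => A (Ordinal hm) (Ordinal hn)) h.
rewrite /Phi /= !summxE mxE (bigD1 s) //= summxE (bigD1 t) //= mxE gen5E /=.
have -> : ((s : nat) == s + 2 - 2)%N && (t + 3 == t + 2 + 1)%N by apply/andP; split; apply/eqP; lia.
have -> : ((s : nat) == s + 2 - 1)%N && (t + 3 == t + 2)%N = false by apply/andP => -[/eqP ? /eqP ?]; lia.
have -> : ((s : nat) == s + 2)%N && (t + 3 == t + 2 - 1)%N = false by apply/andP => -[/eqP ? /eqP ?]; lia.
have -> : ((s : nat) == s + 2 + 1)%N && (t + 3 == t + 2 - 2)%N = false by apply/andP => -[/eqP ? /eqP ?]; lia.
rewrite !mulr0 subr0 addr0 subr0 mulr1.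
rewrite big1 ?addr0; last first.
  move=> t' ht'; rewrite mxE gen5E /=.
  have ne : (nat_of_ord t' != nat_of_ord t) by [].
  have -> : ((s : nat) == s + 2 - 2)%N && (t + 3 == t' + 2 + 1)%N = false.
    by apply/andP => -[/eqP ? /eqP ?]; move: ne => /eqP; lia.
  have -> : ((s : nat) == s + 2 - 1)%N && (t + 3 == t' + 2)%N = false by apply/andP => -[/eqP ? /eqP ?]; lia.
  have -> : ((s : nat) == s + 2)%N && (t + 3 == t' + 2 - 1)%N = false by apply/andP => -[/eqP ? /eqP ?]; lia.
  have -> : ((s : nat) == s + 2 + 1)%N && (t + 3 == t' + 2 - 2)%N = false by apply/andP => -[/eqP ? /eqP ?]; lia.
  by rewrite !mulr0 subr0 addr0 subr0 mulr0.
rewrite big1 ?addr0 // => s' hs'; rewrite summxE big1 // => t' _; rewrite mxE gen5E /=.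
case: (ltnP s' s) => [lt|ge]; first by rewrite IH ?mul0r.
have ne : (nat_of_ord s' != nat_of_ord s) by [].
have -> : ((s : nat) == s' + 2 - 2)%N && (t + 3 == t' + 2 + 1)%N = false.
  by apply/andP => -[/eqP ? /eqP ?]; move: ne => /eqP; lia.
have -> : ((s : nat) == s' + 2 - 1)%N && (t + 3 == t' + 2)%N = false by apply/andP => -[/eqP ? /eqP ?]; lia.
have -> : ((s : nat) == s' + 2)%N && (t + 3 == t' + 2 - 1)%N = false by apply/andP => -[/eqP ? /eqP ?]; lia.
have -> : ((s : nat) == s' + 2 + 1)%N && (t + 3 == t' + 2 - 2)%N = false by apply/andP => -[/eqP ? /eqP ?]; lia.
by rewrite !mulr0 subr0 addr0 subr0 mulr0.
Qed.
Lemma Phi_inj0 (C : fieldType) m n (a : C) (Q : 'M[C]_(m - 3, n - 3)) :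
  Phi a Q = 0 -> Q = 0.
Proof.
move=> h.
suff H : forall k (s : 'I_(m - 3)) t, (s <= k)%N -> Q s t = 0.
  by apply/matrixP => s t; rewrite mxE; exact: (H s).
elim=> [|k IH] s t hs; apply: (@Phi_key C m n a Q s t h) => s' t' lt.
  by move: lt; rewrite leqn0 in hs; rewrite (eqP hs).
by apply: IH; rewrite -ltnS (leq_trans lt).
Qed.

Lemma dimS5 (C : fieldType) m n (a : C) :
  \dim (@S5 C m n a) = ((m - 3) * (n - 3))%N.
Proof.
apply/eqP; rewrite eqn_leq; apply/andP; split.
  by rewrite (leq_trans (dim_span _)) // size_allpairs !size_iota.
pose f := linfun (@Phi C m n a).
have inj : lker f == 0%VS.
  apply/lker0P => x y; rewrite !lfunE /= => hxy; apply/eqP; rewrite -subr_eq0; apply/eqP.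
  by apply: (@Phi_inj0 C m n a); rewrite linearB /= hxy subrr.
have : \dim (f @: fullv) = \dim (fullv : {vspace 'M[C]_(m - 3, n - 3)}).
  by apply: limg_dim_eq; rewrite (eqP inj) capv0.
rewrite dimvf dim_matrix => h.
rewrite (_ : ((m - 3) * (n - 3))%N = \dim (limg f)); last by rewrite h.
apply: dimvS; apply/subvP => v /memv_imgP [Q _ ->]; rewrite lfunE /=.
apply: memv_suml => s _; apply: memv_suml => t _; apply: memvZ; apply: memv_span.
by apply: allpairs_f; rewrite mem_iota leq_addl addnC ltn_add2l /=.
Qed.
Theorem theorem5p5 (R : realType) (m n : nat) (a : R) :
  (4 <= minn m n)%N ->
  (a = 3 \/ 5 < a) ->
  (forall psi : 'M[R[i]]_(m, n),
      psi \in @S5 R[i] m n (Complex a 0) -> psi != 0 ->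
      (3 < schmidt_rank psi)%N) /\
  \dim (@S5 R[i] m n (Complex a 0)) = ((m - 3) * (n - 3))%N.
Proof.
move=> _ ha; split; last exact: dimS5.
move=> psi hS hn; rewrite /schmidt_rank ltnNge; apply: contra hn => hr; apply/eqP.
case: ha => [ha | ha].
  by move: hS; rewrite ha => hS; apply: part1_a3.
by apply: (part1_agt3 _ hS hr); lra.
Qed.
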